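(* Let $A\in\mathbb{C}^{n\times n}$, $B\in\mathbb{C}^{n\times m}$, $C\in\mathbb{C}^{p\times n}$, $D\in\mathbb{C}^{p\times m}$ and $F\in\mathbb{C}^{\nu\times\nu}$, and suppose $\mathrm{eig}(A)\cap\mathrm{eig}(F)=\emptyset$. The following statements are equivalent: (i) $\mathcal{R}_\Sigma(\lambda)$ has full row rank $n+p$ for all $\lambda\in\mathrm{eig}(F)$; (ii) for every pair $(P,Q)\in\mathbb{C}^{n\times\nu}\times\mathbb{C}^{p\times\nu}$, the system of equations $$\Pi F = A\Pi + B\Psi + P,\qquad 0 = C\Pi + D\Psi + Q$$ admits a solution $(\Pi,\Psi)\in\mathbb{C}^{n\times\nu}\times\mathbb{C}^{m\times\nu}$; (iii) for every pair $(\bar P,\bar Q)\in\mathbb{C}^{\nu\times n}\times\mathbb{C}^{\nu\times m}$ for which the system of equations $$MA = FM + GC + \bar P,\qquad 0 = -MB + GD + \bar Q$$ admits a solution $(M,G)\in\mathbb{C}^{\nu\times n}\times\mathbb{C}^{\nu\times p}$, this solution is unique; (iv) the linear map $\mathcal{C}_{\rm p}:\mathbb{C}^{m\times\nu}\to\mathbb{C}^{p\times\nu}$ is surjective; (v) the linear map $\mathcal{C}_{\rm d}:\mathbb{C}^{\nu\times p}\to\mathbb{C}^{\nu\times m}$ is injective. Moreover, for any $G\in\mathbb{C}^{\nu\times p}$: (a) if $(F,G)$ is controllable and (i) holds, then $(F,\mathcal{C}_{\rm d}(G))$ is controllable; (b) if $(F,G)$ is stabilizable and $\mathcal{R}_\Sigma(\lambda)$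 has full row rank for all $\lambda\in\mathrm{eig}(F)\cap\mathbb{C}_{\geq 0}$, then $(F,\mathcal{C}_{\rm d}(G))$ is stabilizable. Furthermore, the converse of (a) holds (i.e., $(F,\mathcal{C}_{\rm d}(G))$ controllable implies $(F,G)$ controllable and (i)) provided $G^{\sf T}\ker(\lambda I_\nu - F^{\sf T})=\mathbb{C}^p$ for all $\lambda\in\mathrm{eig}(F)$; and the converse of (b) holds (i.e., $(F,\mathcal{C}_{\rm d}(G))$ stabilizable implies $(F,G)$ stabilizable and $\mathcal{R}_\Sigma(\lambda)$ has full row rank for all $\lambda\in\mathrm{eig}(F)\cap\mathbb{C}_{\ge 0}$) provided $G^{\sf T}\ker(\lambda I_\nu - F^{\sf T})=\mathbb{C}^p$ for all $\lambda\in\mathrm{eig}(F)\cap\mathbb{C}_{\geq 0}$.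
   Context: Data: $A\in\mathbb{C}^{n\times n}$, $B\in\mathbb{C}^{n\times m}$, $C\in\mathbb{C}^{p\times n}$, $D\in\mathbb{C}^{p\times m}$, $F\in\mathbb{C}^{\nu\times\nu}$, with $\mathrm{eig}(A)\cap\mathrm{eig}(F)=\emptyset$. The Rosenbrock system matrix is $\mathcal{R}_\Sigma(\lambda)=\begin{bmatrix}A-\lambda I_n & B\\ C & D\end{bmatrix}\in\mathbb{C}^{(n+p)\times(n+m)}$ for $\lambda\in\mathbb{C}$. The steady-state cascade (SSC) operators are defined as follows: for $H\in\mathbb{C}^{m\times\nu}$, $\mathcal{C}_{\rm p}(H)=C\Pi+DH$, where $\Pi\in\mathbb{C}^{n\times\nu}$ is the unique solution of the Sylvester equation $\Pi F - A\Pi = BH$; for $G\in\mathbb{C}^{\nu\times p}$, $\mathcal{C}_{\rm d}(G)=-MB+GD$, where $M\in\mathbb{C}^{\nu\times n}$ is the unique solution of $MA-FM=GC$. $\mathbb{C}_{\geq 0}$ is the set of complex numbers with nonnegative real part. For a matrix $G$ and subspace $\mathcal{V}$, $G^{\sf T}\mathcal{V}=\{G^{\sf T}v: v\in\mathcal{V}\}$. A pair $(F,G)$ is stabilizable if every eigenvalue $\lambda$ of $F$ with $\mathrm{Re}\,\lambda\ge 0$ is controllable, i.e., $\varphi^{\sf T}G\neq 0$ for every nonzero $\varphi$ with $\varphi^{\sf T}F=\lambda\varphi^{\sf T}$. *)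

(* Defs.v *)
From HB Require Import structures.
From mathcomp Require Import all_boot all_order all_algebra.
From Stdlib Require Import ClassicalEpsilon.
Set Implicit Arguments. Unset Strict Implicit. Unset Printing Implicit Defensive.
Import Order.TTheory GRing.Theory Num.Theory.
Local Open Scope ring_scope.

Section Defs.
Variable C : numClosedFieldType.

Definition disjoint_spectra (n nu : nat) (A : 'M[C]_n) (F : 'M[C]_nu) : Prop :=
  forall l : C, eigenvalue A l -> ~ eigenvalue F l.

Definition rosenbrock (n m p : nat) (A : 'M[C]_n) (B : 'M[C]_(n, m))
    (Cm : 'M[C]_(p, n)) (D : 'M[C]_(p, m)) (l : C) : 'M[C]_(n + p, n + m) :=
  block_mx (A - l%:M) B Cm D.

(* Π : the (unique, under disjoint spectra) solution of Π F - A Π = B H *)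
Definition sylv_p (n m nu : nat) (A : 'M[C]_n) (B : 'M[C]_(n, m)) (F : 'M[C]_nu)
    (H : 'M[C]_(m, nu)) : 'M[C]_(n, nu) :=
  epsilon (inhabits 0) (fun Pi : 'M[C]_(n, nu) => Pi *m F - A *m Pi = B *m H).

(* M : the (unique, under disjoint spectra) solution of M A - F M = G C *)
Definition sylv_d (n p nu : nat) (A : 'M[C]_n) (Cm : 'M[C]_(p, n)) (F : 'M[C]_nu)
    (G : 'M[C]_(nu, p)) : 'M[C]_(nu, n) :=
  epsilon (inhabits 0) (fun M : 'M[C]_(nu, n) => M *m A - F *m M = G *m Cm).

Definition SSC_p (n m p nu : nat) (A : 'M[C]_n) (B : 'M[C]_(n, m))
    (Cm : 'M[C]_(p, n)) (D : 'M[C]_(p, m)) (F : 'M[C]_nu)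
    (H : 'M[C]_(m, nu)) : 'M[C]_(p, nu) :=
  Cm *m sylv_p A B F H + D *m H.

Definition SSC_d (n m p nu : nat) (A : 'M[C]_n) (B : 'M[C]_(n, m))
    (Cm : 'M[C]_(p, n)) (D : 'M[C]_(p, m)) (F : 'M[C]_nu)
    (G : 'M[C]_(nu, p)) : 'M[C]_(nu, m) :=
  - sylv_d A Cm F G *m B + G *m D.

Definition ctrb_eig (nu q : nat) (F : 'M[C]_nu) (G : 'M[C]_(nu, q)) (l : C) : Prop :=
  forall phi : 'rV[C]_nu, phi != 0 -> phi *m F = l *: phi -> phi *m G != 0.

(* (F, G) controllable: every eigenvalue of F is controllable (PBH test). *)
Definition controllable (nu q : nat) (F : 'M[C]_nu) (G : 'M[C]_(nu, q)) : Prop :=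
  forall l : C, eigenvalue F l -> ctrb_eig F G l.

Definition stabilizable (nu q : nat) (F : 'M[C]_nu) (G : 'M[C]_(nu, q)) : Prop :=
  forall l : C, eigenvalue F l -> 0 <= 'Re l -> ctrb_eig F G l.

(* G^T ker(λ I - F^T) = C^p  (vectors of C^p written as row vectors y^T) *)
Definition GT_ker_full (nu p : nat) (F : 'M[C]_nu) (G : 'M[C]_(nu, p)) (l : C) : Prop :=
  forall y : 'rV[C]_p, exists phi : 'rV[C]_nu, phi *m F = l *: phi /\ phi *m G = y.

End Defs.

(* Main.v *)
Require Import Defs.
From HB Require Import structures.
From mathcomp Require Import all_boot all_order all_algebra.
From Stdlib Require Import ClassicalEpsilon Classical.
Set Implicit Arguments. Unset Strict Implicit. Unset Printing Implicit Defensive.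
Import Order.TTheory GRing.Theory Num.Theory.
Local Open Scope ring_scope.

Section Gen.
Variable C : numClosedFieldType.

Lemma eig_unit n (A : 'M[C]_n) a : eigenvalue A a = ~~ (A - a%:M \in unitmx).
Proof. by rewrite /eigenvalue /eigenspace kermx_eq0 row_free_unit. Qed.

Lemma eig_tr n (A : 'M[C]_n) a : eigenvalue A^T a = eigenvalue A a.
Proof.
by rewrite !eig_unit -unitmx_tr linearB /= trmxK tr_scalar_mx.
Qed.

Lemma noeig_row n k (A : 'M[C]_n) a (x : 'M[C]_(k, n)) :
  ~ eigenvalue A a -> x *m (A - a%:M) = 0 -> x = 0.
Proof.
move=> /negP; rewrite eig_unit negbK => U h.
by rewrite -(mulmxK U x) h mul0mx.
Qed.

Lemma noeig_col n k (A : 'M[C]_n) a (x : 'M[C]_(n, k)) :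
  ~ eigenvalue A a -> (A - a%:M) *m x = 0 -> x = 0.
Proof.
move=> /negP; rewrite eig_unit negbK => U h.
by rewrite -(mulKmx U x) h mulmx0.
Qed.

Lemma rowfreeP r c (M : 'M[C]_(r, c)) :
  row_free M <-> (forall u : 'rV_r, u *m M = 0 -> u = 0).
Proof.
split=> [fr u h|h].
  by apply: (row_free_inj fr); rewrite h mul0mx.
rewrite -kermx_eq0; apply/eqP/row_matrixP => i; rewrite row0; apply: h.
by apply/sub_kermxP; rewrite (submx_trans (row_sub i _)) // submx_refl.
Qed.

Lemma inj_surj a b (f : 'M[C]_(a, b) -> 'M[C]_(a, b)) :
  linear f -> (forall X, f X = 0 -> X = 0) -> forall Y, exists X, f X = Y.
Proof.
move=> lf inj.
pose flM := GRing.isLinear.Build _ _ _ _ f lf.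
pose fL : {linear _ -> _} := HB.pack f flM.
have fLE : forall X, fL X = f X by [].
have L0 : row_free (lin_mx fL).
  apply/rowfreeP => u h.
  have : fL (vec_mx u) = 0 by rewrite -mx_rV_lin h linear0.
  by rewrite !fLE => /inj /(congr1 mxvec); rewrite vec_mxK linear0.
rewrite row_free_unit in L0 => Y.
exists (vec_mx (mxvec Y *m invmx (lin_mx fL))).
by rewrite -fLE -mx_rV_lin mulmxKV // mxvecK.
Qed.

End Gen.

Section Gen2.
Variable C : numClosedFieldType.

Lemma charF_split nu' (F : 'M[C]_nu'.+1) :
  exists r : seq C, (forall z, z \in r -> eigenvalue F z) /\
     \prod_(z <- r) (F - z%:M) = 0.
Proof.
have [r Hr] := closed_field_poly_normal (char_poly F).
rewrite (monicP (char_poly_monic F)) scale1r in Hr.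
exists r; split.
  move=> z zr; rewrite eigenvalue_root_char Hr.
  by rewrite /root horner_prod prodf_seq_eq0; apply/hasP; exists z => //; rewrite !hornerE subrr.
have := Cayley_Hamilton F; rewrite Hr rmorph_prod => <-.
by apply: eq_bigr => z _; rewrite rmorphB /= horner_mx_X horner_mx_C.
Qed.

Lemma sylv_core n nu (A : 'M[C]_n) (F : 'M[C]_nu) :
  disjoint_spectra A F -> forall X : 'M[C]_(n, nu), X *m F = A *m X -> X = 0.
Proof.
case: nu F => [|nu'] F hAF X hX; first by rewrite thinmx0.
have [r [rE r0]] := charF_split F.
have key : forall s : seq C, (forall z, z \in s -> eigenvalue F z) ->
   forall X : 'M[C]_(n, nu'.+1), X *m F = A *m X ->
   X *m \prod_(z <- s) (F - z%:M) = 0 -> X = 0.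
  elim=> [|z s IH] sE Y hY.
    by rewrite big_nil mulmx1.
  rewrite big_cons -mulmxE mulmxA => h.
  have hz : eigenvalue F z by apply: sE; rewrite mem_head.
  have Y1 : Y *m (F - z%:M) = (A - z%:M) *m Y.
    by rewrite mulmxBr mulmxBl hY scalar_mxC.
  have : Y *m (F - z%:M) = 0.
    apply: IH => //.
      by move=> w ws; apply: sE; rewrite inE ws orbT.
    rewrite -mulmxA (_ : (F - z%:M) *m F = F *m (F - z%:M)).
      by rewrite mulmxA hY mulmxA.
    by rewrite mulmxBl mulmxBr scalar_mxC.
  rewrite Y1 => /(noeig_col (fun hA => hAF z hA hz)); done.
by apply: (key r rE X hX); rewrite r0 mulmx0.
Qed.

End Gen2.

Lemma subACA (V : zmodType) (a b c d : V) : a - b - (c - d) = (a - c) - (b - d).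
Proof. by rewrite opprB addrACA [- b + _]addrC -addrACA opprB. Qed.

Section Sys.
Variable C : numClosedFieldType.
Variables n m p nu : nat.
Variables (A : 'M[C]_n) (B : 'M[C]_(n, m)) (Cm : 'M[C]_(p, n)) (D : 'M[C]_(p, m))
  (F : 'M[C]_nu).
Hypothesis hAF : disjoint_spectra A F.

Lemma dis_tr : disjoint_spectra A^T F^T.
Proof. by move=> l; rewrite !eig_tr; apply: hAF. Qed.

Lemma sylvP_inj (X : 'M[C]_(n, nu)) : X *m F - A *m X = 0 -> X = 0.
Proof. by move=> h; apply: (sylv_core hAF); apply/eqP; rewrite -subr_eq0 h. Qed.

Lemma sylvD_inj (M : 'M[C]_(nu, n)) : M *m A - F *m M = 0 -> M = 0.
Proof.
move=> h; apply: trmx_inj; rewrite trmx0; apply: (sylv_core dis_tr).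
by rewrite -!trmx_mul; apply/eqP; rewrite -subr_eq0 -linearB /= -oppr_eq0 -linearN /= opprB h trmx0.
Qed.

Lemma sylvP_ex (P : 'M[C]_(n, nu)) : exists X, X *m F - A *m X = P.
Proof.
apply: (@inj_surj C n nu (fun X => X *m F - A *m X)).
  move=> a u v /=; rewrite mulmxDl mulmxDr -scalemxAl -scalemxAr.
  by rewrite scalerBr opprD addrACA.
exact: sylvP_inj.
Qed.

Lemma sylvD_ex (P : 'M[C]_(nu, n)) : exists M, M *m A - F *m M = P.
Proof.
apply: (@inj_surj C nu n (fun X => X *m A - F *m X)).
  move=> a u v /=; rewrite mulmxDl mulmxDr -scalemxAl -scalemxAr.
  by rewrite scalerBr opprD addrACA.
exact: sylvD_inj.
Qed.

Lemma sylvp_spec H : sylv_p A B F H *m F - A *m sylv_p A B F H = B *m H.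
Proof. exact: (epsilon_spec (inhabits 0) (fun Pi : 'M[C]_(n, nu) => Pi *m F - A *m Pi = B *m H) (sylvP_ex _)). Qed.

Lemma sylvd_spec G : sylv_d A Cm F G *m A - F *m sylv_d A Cm F G = G *m Cm.
Proof. exact: (epsilon_spec (inhabits 0) (fun M : 'M[C]_(nu, n) => M *m A - F *m M = G *m Cm) (sylvD_ex _)). Qed.

Lemma sylvp_uniq H Pi : Pi *m F - A *m Pi = B *m H -> sylv_p A B F H = Pi.
Proof.
move=> h; apply/eqP; rewrite -subr_eq0; apply/eqP; apply: sylvP_inj.
by rewrite mulmxBl mulmxBr subACA sylvp_spec h subrr.
Qed.

Lemma sylvd_uniq G M : M *m A - F *m M = G *m Cm -> sylv_d A Cm F G = M.
Proof.
move=> h; apply/eqP; rewrite -subr_eq0; apply/eqP; apply: sylvD_inj.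
by rewrite mulmxBl mulmxBr subACA sylvd_spec h subrr.
Qed.

End Sys.

Lemma addsubACA (V : zmodType) (a b c d : V) : (a + b) - (c + d) = (a - c) + (b - d).
Proof. by rewrite opprD addrACA. Qed.

Section Sys2.
Variable C : numClosedFieldType.
Variables n m p nu : nat.
Variables (A : 'M[C]_n) (B : 'M[C]_(n, m)) (Cm : 'M[C]_(p, n)) (D : 'M[C]_(p, m))
  (F : 'M[C]_nu).
Hypothesis hAF : disjoint_spectra A F.

Local Notation Md := (sylv_d A Cm F).
Local Notation Pp := (sylv_p A B F).
Local Notation Cd := (SSC_d A B Cm D F).
Local Notation Cp := (SSC_p A B Cm D F).

Lemma sylvd_lin a G1 G2 : Md (a *: G1 + G2) = a *: Md G1 + Md G2.
Proof.
apply: (sylvd_uniq hAF).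
rewrite mulmxDl mulmxDr -scalemxAl -scalemxAr addsubACA -scalerBr !(sylvd_spec Cm hAF).
by rewrite mulmxDl -scalemxAl.
Qed.

Lemma sylvp_lin a H1 H2 : Pp (a *: H1 + H2) = a *: Pp H1 + Pp H2.
Proof.
apply: (sylvp_uniq hAF).
rewrite mulmxDl mulmxDr -scalemxAl -scalemxAr addsubACA -scalerBr !(sylvp_spec B hAF).
by rewrite mulmxDr -scalemxAr.
Qed.

Lemma Cd_lin a G1 G2 : Cd (a *: G1 + G2) = a *: Cd G1 + Cd G2.
Proof.
rewrite /SSC_d sylvd_lin !mulNmx !mulmxDl -!scalemxAl.
by rewrite scalerDr scalerN opprD addrACA.
Qed.

Lemma Cp_lin a H1 H2 : Cp (a *: H1 + H2) = a *: Cp H1 + Cp H2.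
Proof.
rewrite /SSC_p sylvp_lin !mulmxDr -!scalemxAr.
by rewrite scalerDr addrACA.
Qed.

Lemma Cd0 : Cd 0 = 0.
Proof.
rewrite /SSC_d (_ : Md 0 = 0) ?mul0mx ?oppr0 ?mulNmx ?mul0mx ?oppr0 ?addr0 //.
by apply: (sylvd_uniq hAF); rewrite mul0mx mulmx0 subrr mul0mx.
Qed.

Lemma Cp0 : Cp 0 = 0.
Proof.
rewrite /SSC_p (_ : Pp 0 = 0) ?mulmx0 ?addr0 //.
by apply: (sylvp_uniq hAF); rewrite mul0mx mulmx0 subrr mulmx0.
Qed.

Lemma CdB G1 G2 : Cd (G1 - G2) = Cd G1 - Cd G2.
Proof. by rewrite addrC -scaleN1r Cd_lin scaleN1r addrC. Qed.

Lemma sylvd_F G : Md (F *m G) = F *m Md G.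
Proof.
apply: (sylvd_uniq hAF).
by rewrite -mulmxA -mulmxBr (sylvd_spec Cm hAF) mulmxA.
Qed.

Lemma Cd_F G : Cd (F *m G) = F *m Cd G.
Proof. by rewrite /SSC_d sylvd_F mulmxDr !mulNmx mulmxN !mulmxA. Qed.

Lemma duality G H : \tr (Cd G *m H) = \tr (G *m Cp H).
Proof.
rewrite /SSC_d /SSC_p mulmxDl mulmxDr !mxtraceD; congr (_ + _); last by rewrite mulmxA.
rewrite !mulNmx -mulmxA -(sylvp_spec B hAF) mulmxA -(sylvd_spec Cm hAF).
rewrite mulmxBr mulmxBl opprB !linearB /= !mulmxA; congr (_ - _).
by rewrite mxtrace_mulC mulmxA.
Qed.

End Sys2.

Lemma charF_split' (C : numClosedFieldType) nu (F : 'M[C]_nu) :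
  exists r : seq C, (forall z, z \in r -> eigenvalue F z) /\
     \prod_(z <- r) (F - z%:M) = 0.
Proof.
case: nu F => [|nu'] F; last exact: charF_split.
by exists [::]; split => //; rewrite flatmx0.
Qed.

Lemma nzrow (C : numClosedFieldType) a b (G : 'M[C]_(a, b)) :
  G != 0 -> exists i, row i G != 0.
Proof.
move=> nz; apply: NNPP => hn; case/eqP: nz; apply/row_matrixP => i.
by rewrite row0; apply/eqP; apply: contra_notT hn => h; exists i.
Qed.

Lemma colmul_eq0 (C : numClosedFieldType) a b (w : 'cV[C]_a) (y : 'rV[C]_b) :
  w != 0 -> w *m y = 0 -> y = 0.
Proof.
move=> nz h; have [k hk] := nzrow nz.
have : row k (w *m y) = 0 by rewrite h row0.
rewrite row_mul [row k w]mx11_scalar mul_scalar_mx => /eqP.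
rewrite scaler_eq0 => /orP [/eqP e|/eqP //].
by move: hk; rewrite [row k w]mx11_scalar e -scalemx1 scale0r eqxx.
Qed.

Lemma mulE (C : numClosedFieldType) k (X Y : 'M[C]_k) : X * Y = X *m Y.
Proof. by []. Qed.

Section Sys3.
Variable C : numClosedFieldType.
Variables n m p nu : nat.
Variables (A : 'M[C]_n) (B : 'M[C]_(n, m)) (Cm : 'M[C]_(p, n)) (D : 'M[C]_(p, m))
  (F : 'M[C]_nu).
Hypothesis hAF : disjoint_spectra A F.

Local Notation Md := (sylv_d A Cm F).
Local Notation Pp := (sylv_p A B F).
Local Notation Cd := (SSC_d A B Cm D F).
Local Notation Cp := (SSC_p A B Cm D F).
Local Notation R := (rosenbrock A B Cm D).

Let CdL := Cd_lin B Cm D hAF.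
Let Cd0' := Cd0 B Cm D hAF.
Let CdB' := CdB B Cm D hAF.
Let CdF := Cd_F B Cm D hAF.
Let sdL := sylvd_lin Cm hAF.
Let sdF := sylvd_F Cm hAF.
Let dual := duality B Cm D hAF.
Let CpL := Cp_lin B Cm D hAF.
Let Cp0' := Cp0 B Cm D hAF.
Let sdS := sylvd_spec Cm hAF.
Let spS := sylvp_spec B hAF.

Lemma ros_mul l (x : 'rV_n) (y : 'rV_p) :
  row_mx x y *m R l = row_mx (x *m (A - l%:M) + y *m Cm) (x *m B + y *m D).
Proof. by rewrite /rosenbrock mul_row_block. Qed.

Lemma CdZ a G : Cd (a *: G) = a *: Cd G.
Proof. by have := CdL a G 0; rewrite !addr0 Cd0' addr0. Qed.

Lemma sylvdZ a G : Md (a *: G) = a *: Md G.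
Proof. by have := sdL a G 0; rewrite !addr0 (_ : Md 0 = 0) ?addr0 //;
  apply: (sylvd_uniq hAF); rewrite mul0mx mulmx0 subrr mul0mx. Qed.

Lemma Cd_poly (s : seq C) G :
  Cd ((\prod_(z <- s) (F - z%:M)) *m G) = (\prod_(z <- s) (F - z%:M)) *m Cd G.
Proof.
elim: s G => [|z s IH] G; first by rewrite big_nil !mul1mx.
rewrite big_cons mulE -!mulmxA mulmxBl mul_scalar_mx CdB' CdF CdZ IH.
by rewrite mulmxBl mul_scalar_mx.
Qed.

Lemma eig_of_col l (G : 'M[C]_(nu, p)) : G != 0 -> F *m G = l *: G -> eigenvalue F l.
Proof.
move=> nz h; rewrite eig_unit; apply/negP => U; case/eqP: nz.
by rewrite -(mulKmx U G) mulmxBl h mul_scalar_mx subrr mulmx0.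
Qed.

Lemma i_v : (forall l, eigenvalue F l -> row_free (R l)) -> injective Cd.
Proof.
move=> hi.
suff K : forall G, Cd G = 0 -> G = 0.
  by move=> G1 G2 e; apply/eqP; rewrite -subr_eq0; apply/eqP/K; rewrite CdB' e subrr.
move=> G0 hG0; apply: NNPP => nz0; move/eqP: nz0 => nz0.
have [r [_ r0]] := charF_split' F.
have key : forall s : seq C, forall G, Cd G = 0 -> G != 0 ->
    (\prod_(z <- s) (F - z%:M)) *m G = 0 ->
    exists l G', [/\ Cd G' = 0, G' != 0 & F *m G' = l *: G'].
  elim=> [|z s IH] G hG nz; first by rewrite big_nil mul1mx => e; rewrite e eqxx in nz.
  rewrite big_cons mulE -mulmxA => h.
  set H := _ *m G in h.
  have [H0|Hnz] := eqVneq H 0; first exact: (IH G hG nz H0).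
  exists z, H; split => //; first by rewrite /H Cd_poly hG mulmx0.
  by apply/eqP; rewrite -subr_eq0 -mul_scalar_mx -mulmxBl h.
have [l [G [hG nz hF]]] := key r G0 hG0 nz0 ltac:(by rewrite r0 mul0mx).
have el := eig_of_col nz hF.
have [i hi'] := nzrow nz.
have MF : F *m Md G = l *: Md G by rewrite -sdF hF sylvdZ.
have spec := sylvd_spec Cm hAF G.
move: (hi l el) => /rowfreeP /(_ (row_mx (- row i (Md G)) (row i G))).
rewrite ros_mul.
have -> : - row i (Md G) *m (A - l%:M) + row i G *m Cm = 0.
  by rewrite !mulNmx -!row_mul -spec mulmxBr mul_mx_scalar -MF addNr.
have -> : - row i (Md G) *m B + row i G *m D = 0.
  have hr : row i (Cd G) = 0 by rewrite hG row0.
  by rewrite -hr /SSC_d linearD /= !row_mul linearN.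
rewrite row_mx0 => /(_ erefl) /eqP; rewrite row_mx_eq0 => /andP [_ /eqP e].
by rewrite e eqxx in hi'.
Qed.

End Sys3.

Section SysX.
Variable C : numClosedFieldType.
Variables n m p nu : nat.
Variables (A : 'M[C]_n) (B : 'M[C]_(n, m)) (Cm : 'M[C]_(p, n)) (D : 'M[C]_(p, m))
  (F : 'M[C]_nu).
Hypothesis hAF : disjoint_spectra A F.

Local Notation Md := (sylv_d A Cm F).
Local Notation Pp := (sylv_p A B F).
Local Notation Cd := (SSC_d A B Cm D F).
Local Notation Cp := (SSC_p A B Cm D F).
Local Notation R := (rosenbrock A B Cm D).

Let CdL := Cd_lin B Cm D hAF.
Let Cd0' := Cd0 B Cm D hAF.
Let CdB' := CdB B Cm D hAF.
Let CdF := Cd_F B Cm D hAF.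
Let sdL := sylvd_lin Cm hAF.
Let sdF := sylvd_F Cm hAF.
Let dual := duality B Cm D hAF.
Let CpL := Cp_lin B Cm D hAF.
Let Cp0' := Cp0 B Cm D hAF.
Let sdS := sylvd_spec Cm hAF.
Let spS := sylvp_spec B hAF.
Let CdZ' := CdZ B Cm D hAF.

Lemma nonrowfree r c (M : 'M[C]_(r, c)) : ~~ row_free M -> exists2 u : 'rV_r, u != 0 & u *m M = 0.
Proof.
rewrite -kermx_eq0 => /rowV0Pn [v /sub_kermxP hv nz]; by exists v.
Qed.

Lemma right_eig l : eigenvalue F l -> exists2 w : 'cV_nu, w != 0 & F *m w = l *: w.
Proof.
rewrite -eig_tr => /eigenvalueP [v hv nz]; exists v^T.
  by apply: contraNneq nz => h; rewrite -[v]trmxK h trmx0.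
by rewrite -[F]trmxK -trmx_mul hv linearZ.
Qed.

Lemma v_i : injective Cd -> (forall l, eigenvalue F l -> row_free (R l)).
Proof.
move=> inj l el; apply: NNPP => /negP nf.
have [u nz hu] := nonrowfree nf.
have hA : ~ eigenvalue A l by move=> hA; exact: hAF l hA el.
rewrite -(hsubmxK u) ros_mul in hu; move: nz; rewrite -(hsubmxK u).
set x := lsubmx u in hu *; set y := rsubmx u in hu *.
move=> nz; move/eqP: hu; rewrite row_mx_eq0 => /andP [/eqP h1 /eqP h2].
have [w wnz hw] := right_eig el.
have Mdef : Md (w *m y) = - (w *m x).
  apply: (sylvd_uniq hAF).
  have h1' : y *m Cm = - (x *m A) + l *: x.
    by apply/eqP; rewrite addrC -opprB -addr_eq0 addrC -mul_mx_scalar -mulmxBr h1.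
  rewrite mulNmx mulmxN opprK mulmxA hw -scalemxAl scalemxAr.
  by rewrite -mulmxA h1' mulmxDr !mulmxN !mulmxA.
have : Cd (w *m y) = Cd 0.
  rewrite Cd0' /SSC_d Mdef opprK -!mulmxA -mulmxDr h2 mulmx0 //.
move=> /inj /(colmul_eq0 wnz) y0.
rewrite y0 mul0mx addr0 in h1; have x0 := noeig_row hA h1.
by move: nz; rewrite y0 x0 row_mx0 eqxx.
Qed.

End SysX.

Lemma vec_dot (C : numClosedFieldType) a b (X W : 'M[C]_(a, b)) :
  mxvec X *m (mxvec W)^T = (\tr (X *m W^T))%:M.
Proof.
rewrite [LHS]mx11_scalar; congr (_%:M); rewrite !mxE.
rewrite (reindex _ (curry_mxvec_bij _ _)) /=.
rewrite /mxtrace; under [RHS]eq_bigr do rewrite mxE.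
rewrite pair_bigA /=; apply: eq_bigr => [[i j]] _ /=.
by rewrite !mxE !mxvecE.
Qed.

Lemma trace_nondeg (C : numClosedFieldType) a b (X : 'M[C]_(a, b)) :
  (forall Y : 'M[C]_(b, a), \tr (X *m Y) = 0) -> X = 0.
Proof.
move=> h; apply/matrixP => i j; rewrite mxE.
have e := h (delta_mx i j)^T.
have := vec_dot X (delta_mx i j); rewrite e mxvec_delta trmx_delta -colE.
move=> E; have := congr1 (fun M : 'M[C]_1 => M 0 0) E.
rewrite /= !mxE mxvecE => ->; by rewrite mul0rn.
Qed.

Lemma aff_sub (V : zmodType) (a b c d : V) : a = b + c + d -> a - b - c = d.
Proof. by move=> ->; rewrite -addrA -opprD addrC addKr. Qed.

Lemma lin3B (V : zmodType) (a1 a2 b1 b2 c1 c2 : V) :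
  (a1 - a2) - (b1 - b2) - (c1 - c2) = (a1 - b1 - c1) - (a2 - b2 - c2).
Proof. by rewrite (subACA a1) subACA. Qed.

Section SysX.
Variable C : numClosedFieldType.
Variables n m p nu : nat.
Variables (A : 'M[C]_n) (B : 'M[C]_(n, m)) (Cm : 'M[C]_(p, n)) (D : 'M[C]_(p, m))
  (F : 'M[C]_nu).
Hypothesis hAF : disjoint_spectra A F.

Local Notation Md := (sylv_d A Cm F).
Local Notation Pp := (sylv_p A B F).
Local Notation Cd := (SSC_d A B Cm D F).
Local Notation Cp := (SSC_p A B Cm D F).
Local Notation R := (rosenbrock A B Cm D).

Let CdL := Cd_lin B Cm D hAF.
Let Cd0' := Cd0 B Cm D hAF.
Let CdB' := CdB B Cm D hAF.
Let CdF := Cd_F B Cm D hAF.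
Let sdL := sylvd_lin Cm hAF.
Let sdF := sylvd_F Cm hAF.
Let dual := duality B Cm D hAF.
Let CpL := Cp_lin B Cm D hAF.
Let Cp0' := Cp0 B Cm D hAF.
Let sdS := sylvd_spec Cm hAF.
Let spS := sylvp_spec B hAF.
Let CdZ' := CdZ B Cm D hAF.

Lemma v_iii : injective Cd ->
    forall (Pb : 'M[C]_(nu, n)) (Qb : 'M[C]_(nu, m))
           (M1 M2 : 'M[C]_(nu, n)) (G1 G2 : 'M[C]_(nu, p)),
      (M1 *m A = F *m M1 + G1 *m Cm + Pb /\ 0 = - M1 *m B + G1 *m D + Qb) ->
      (M2 *m A = F *m M2 + G2 *m Cm + Pb /\ 0 = - M2 *m B + G2 *m D + Qb) ->
      M1 = M2 /\ G1 = G2.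
Proof.
move=> inj Pb Qb M1 M2 G1 G2 [e1 f1] [e2 f2].
have hM : (M1 - M2) *m A - F *m (M1 - M2) = (G1 - G2) *m Cm.
  apply/eqP; rewrite -subr_eq0; apply/eqP.
  by rewrite !mulmxBl mulmxBr lin3B (aff_sub e1) (aff_sub e2) subrr.
have hMd := sylvd_uniq hAF hM.
have hC : Cd (G1 - G2) = Cd 0.
  rewrite Cd0' /SSC_d hMd !mulNmx !mulmxBl opprB.
  have g1 : - (M1 *m B) + G1 *m D = - Qb by apply/eqP; rewrite -addr_eq0 -mulNmx -f1.
  have g2 : - (M2 *m B) + G2 *m D = - Qb by apply/eqP; rewrite -addr_eq0 -mulNmx -f2.
  transitivity ((- (M1 *m B) + G1 *m D) - (- (M2 *m B) + G2 *m D)); last by rewrite g1 g2 subrr.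
  by rewrite addsubACA opprK [- _ + M2 *m B]addrC.
have G0 := inj _ _ hC.
have : G1 - G2 = 0 by [].
move/eqP; rewrite subr_eq0 => /eqP GE; split => //.
move: hMd; rewrite G0 (_ : Md 0 = 0).
  by move/eqP; rewrite eq_sym subr_eq0 => /eqP.
by apply: (sylvd_uniq hAF); rewrite mul0mx mulmx0 subrr mul0mx.
Qed.

End SysX.

Lemma abel1 (V : zmodType) (a b c d : V) : a + b = c + d + (b - d) + (a - c).
Proof. by rewrite (addrACA c) subrr addr0 [c + b]addrC addrACA subrr addr0 addrC. Qed.

Lemma abel2 (V : zmodType) (x q : V) : 0 = x + (- q - x) + q.
Proof. by rewrite addrCA subrr addr0 addNr. Qed.

Section SysX.
Variable C : numClosedFieldType.
Variables n m p nu : nat.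
Variables (A : 'M[C]_n) (B : 'M[C]_(n, m)) (Cm : 'M[C]_(p, n)) (D : 'M[C]_(p, m))
  (F : 'M[C]_nu).
Hypothesis hAF : disjoint_spectra A F.

Local Notation Md := (sylv_d A Cm F).
Local Notation Pp := (sylv_p A B F).
Local Notation Cd := (SSC_d A B Cm D F).
Local Notation Cp := (SSC_p A B Cm D F).
Local Notation R := (rosenbrock A B Cm D).

Let CdL := Cd_lin B Cm D hAF.
Let Cd0' := Cd0 B Cm D hAF.
Let CdB' := CdB B Cm D hAF.
Let CdF := Cd_F B Cm D hAF.
Let sdL := sylvd_lin Cm hAF.
Let sdF := sylvd_F Cm hAF.
Let dual := duality B Cm D hAF.
Let CpL := Cp_lin B Cm D hAF.
Let Cp0' := Cp0 B Cm D hAF.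
Let sdS := sylvd_spec Cm hAF.
Let spS := sylvp_spec B hAF.
Let CdZ' := CdZ B Cm D hAF.

Lemma iii_v :
   (forall (Pb : 'M[C]_(nu, n)) (Qb : 'M[C]_(nu, m))
           (M1 M2 : 'M[C]_(nu, n)) (G1 G2 : 'M[C]_(nu, p)),
      (M1 *m A = F *m M1 + G1 *m Cm + Pb /\ 0 = - M1 *m B + G1 *m D + Qb) ->
      (M2 *m A = F *m M2 + G2 *m Cm + Pb /\ 0 = - M2 *m B + G2 *m D + Qb) ->
      M1 = M2 /\ G1 = G2) -> injective Cd.
Proof.
move=> h G1 G2 e.
have s1 : Md G1 *m A = F *m Md G1 + G1 *m Cm + 0.
  by rewrite addr0 -(sdS G1) addrC subrK.
have s2 : Md G2 *m A = F *m Md G2 + G2 *m Cm + 0.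
  by rewrite addr0 -(sdS G2) addrC subrK.
have f1 : 0 = - Md G1 *m B + G1 *m D + - Cd G1 by rewrite /SSC_d subrr.
have f2 : 0 = - Md G2 *m B + G2 *m D + - Cd G1.
  by move: e; rewrite /SSC_d => ->; rewrite subrr.
by have [_ ->] := h 0 (- Cd G1) _ _ _ _ (conj s1 f1) (conj s2 f2).
Qed.

Lemma ii_iv :
  (forall (P : 'M[C]_(n, nu)) (Q : 'M[C]_(p, nu)),
      exists (Pi : 'M[C]_(n, nu)) (Psi : 'M[C]_(m, nu)),
        Pi *m F = A *m Pi + B *m Psi + P /\ 0 = Cm *m Pi + D *m Psi + Q) ->
  forall Y, exists H, Cp H = Y.
Proof.
move=> h Y; have [Pi [Psi [e1 e2]]] := h 0 (- Y).
exists Psi; rewrite /SSC_p (sylvp_uniq hAF (H := Psi) (Pi := Pi)).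
  by apply/eqP; rewrite -subr_eq0 e2 eqxx.
by rewrite e1 addr0 addrAC subrr add0r.
Qed.

Lemma iv_ii : (forall Y, exists H, Cp H = Y) ->
  (forall (P : 'M[C]_(n, nu)) (Q : 'M[C]_(p, nu)),
      exists (Pi : 'M[C]_(n, nu)) (Psi : 'M[C]_(m, nu)),
        Pi *m F = A *m Pi + B *m Psi + P /\ 0 = Cm *m Pi + D *m Psi + Q).
Proof.
move=> h P Q; have [Pi0 e0] := sylvP_ex hAF P.
have [H eH] := h (- Q - Cm *m Pi0).
exists (Pi0 + Pp H), H; split.
  by rewrite mulmxDl mulmxDr -e0 -(spS H); exact: abel1.
move: eH; rewrite /SSC_p => eH.
by rewrite mulmxDr -(addrA (Cm *m Pi0)) eH; exact: abel2.
Qed.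

End SysX.

Section SysX.
Variable C : numClosedFieldType.
Variables n m p nu : nat.
Variables (A : 'M[C]_n) (B : 'M[C]_(n, m)) (Cm : 'M[C]_(p, n)) (D : 'M[C]_(p, m))
  (F : 'M[C]_nu).
Hypothesis hAF : disjoint_spectra A F.

Local Notation Md := (sylv_d A Cm F).
Local Notation Pp := (sylv_p A B F).
Local Notation Cd := (SSC_d A B Cm D F).
Local Notation Cp := (SSC_p A B Cm D F).
Local Notation R := (rosenbrock A B Cm D).

Let CdL := Cd_lin B Cm D hAF.
Let Cd0' := Cd0 B Cm D hAF.
Let CdB' := CdB B Cm D hAF.
Let CdF := Cd_F B Cm D hAF.
Let sdL := sylvd_lin Cm hAF.
Let sdF := sylvd_F Cm hAF.
Let dual := duality B Cm D hAF.
Let CpL := Cp_lin B Cm D hAF.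
Let Cp0' := Cp0 B Cm D hAF.
Let sdS := sylvd_spec Cm hAF.
Let spS := sylvp_spec B hAF.
Let CdZ' := CdZ B Cm D hAF.

Lemma iv_v : (forall Y, exists H, Cp H = Y) -> injective Cd.
Proof.
move=> h G1 G2 e; apply/eqP; rewrite -subr_eq0; apply/eqP.
have e0 : Cd (G1 - G2) = 0 by rewrite CdB' e subrr.
apply: trace_nondeg => Y; have [H <-] := h Y.
by rewrite -dual e0 mul0mx linear0.
Qed.

Lemma v_iv : injective Cd -> (forall Y, exists H, Cp H = Y).
Proof.
move=> inj.
have lin : linear Cp by move=> a u v; rewrite CpL.
pose flM := GRing.isLinear.Build _ _ _ _ Cp lin.
pose fL : {linear _ -> _} := HB.pack Cp flM.
have fLE : forall X, fL X = Cp X by [].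
have [full|nfull] := boolP (row_full (lin_mx fL)).
  move=> Y; have [Bm hB] := row_fullP full.
  exists (vec_mx (mxvec Y *m Bm)).
  by rewrite -fLE -mx_rV_lin -mulmxA hB mulmx1 mxvecK.
exfalso.
have cnz : cokermx (lin_mx fL) != 0.
  rewrite -mxrank_eq0 mxrank_coker subn_eq0 -ltnNge.
  by move: nfull; rewrite /row_full => /negP nf; rewrite ltn_neqAle rank_leq_col andbT; apply/negP.
have [j hj] : exists j, row j (cokermx (lin_mx fL))^T != 0.
  by apply: nzrow; apply: contraNneq cnz => h; rewrite -[cokermx _]trmxK h trmx0.
pose cc := (row j (cokermx (lin_mx fL))^T)^T.
pose W : 'M[C]_(p, nu) := vec_mx cc^T.
have hL : lin_mx fL *m cc^T^T = 0.
  by rewrite trmxK /cc tr_row trmxK colE mulmxA mulmx_coker mul0mx.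
have hW : Cd W^T = 0.
  apply: trace_nondeg => H.
  rewrite dual mxtrace_mulC.
  have := vec_dot (Cp H) W.
  rewrite /W vec_mxK -fLE -mul_vec_lin -mulmxA hL mulmx0 => /esym e.
  have := congr1 (fun M : 'M[C]_1 => M 0 0) e; rewrite /= !mxE.
  by rewrite trmxK eqxx mulr1n.
have : W^T = 0 by apply: inj; rewrite hW Cd0'.
move/(congr1 trmx); rewrite trmxK trmx0 /W => /(congr1 mxvec); rewrite vec_mxK linear0.
move/(congr1 trmx); rewrite trmxK trmx0 => c0.
by move: hj; rewrite -[row j _]trmxK -/cc c0 trmx0 eqxx.
Qed.

End SysX.

Section SysX.
Variable C : numClosedFieldType.
Variables n m p nu : nat.
Variables (A : 'M[C]_n) (B : 'M[C]_(n, m)) (Cm : 'M[C]_(p, n)) (D : 'M[C]_(p, m))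
  (F : 'M[C]_nu).
Hypothesis hAF : disjoint_spectra A F.

Local Notation Md := (sylv_d A Cm F).
Local Notation Pp := (sylv_p A B F).
Local Notation Cd := (SSC_d A B Cm D F).
Local Notation Cp := (SSC_p A B Cm D F).
Local Notation R := (rosenbrock A B Cm D).

Let CdL := Cd_lin B Cm D hAF.
Let Cd0' := Cd0 B Cm D hAF.
Let CdB' := CdB B Cm D hAF.
Let CdF := Cd_F B Cm D hAF.
Let sdL := sylvd_lin Cm hAF.
Let sdF := sylvd_F Cm hAF.
Let dual := duality B Cm D hAF.
Let CpL := Cp_lin B Cm D hAF.
Let Cp0' := Cp0 B Cm D hAF.
Let sdS := sylvd_spec Cm hAF.
Let spS := sylvp_spec B hAF.
Let CdZ' := CdZ B Cm D hAF.

Lemma phiCd G (phi : 'rV_nu) : phi *m Cd G = - (phi *m Md G) *m B + (phi *m G) *m D.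
Proof. by rewrite /SSC_d mulmxDr !mulmxA mulmxN. Qed.

Lemma phiM G l (phi : 'rV_nu) : phi *m F = l *: phi ->
  (phi *m Md G) *m (A - l%:M) = (phi *m G) *m Cm.
Proof.
move=> hphi.
rewrite mulmxBr mul_mx_scalar scalemxAl -hphi -!mulmxA -mulmxBr sdS.
by rewrite mulmxA.
Qed.

Lemma ctrl_core l G (phi : 'rV_nu) : row_free (R l) -> phi *m F = l *: phi ->
  phi *m Cd G = 0 -> phi *m G = 0.
Proof.
move=> /rowfreeP fr hphi h.
have := fr (row_mx (- (phi *m Md G)) (phi *m G)).
rewrite ros_mul mulNmx phiM // addNr -phiCd h row_mx0 => /(_ erefl) /eqP.
by rewrite row_mx_eq0 => /andP [_ /eqP].
Qed.

Lemma ctrl_conv l G : eigenvalue F l -> GT_ker_full F G l -> ctrb_eig F (Cd G) l ->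
  ctrb_eig F G l /\ row_free (R l).
Proof.
move=> el gk cd.
have hA : ~ eigenvalue A l by move=> hA; exact: hAF l hA el.
split.
  move=> phi nz hphi; apply/eqP => h0.
  have := phiM G hphi; rewrite h0 mul0mx => /(noeig_row hA) hz.
  by move: (cd phi nz hphi); rewrite phiCd hz h0 !mul0mx oppr0 mul0mx addr0 eqxx.
apply/rowfreeP => u; rewrite -(hsubmxK u) ros_mul.
set x := lsubmx u; set y := rsubmx u.
move/eqP; rewrite row_mx_eq0 => /andP [/eqP h1 /eqP h2].
have [phi [hphi hy]] := gk y.
have hx : phi *m Md G = - x.
  apply/eqP; rewrite -addr_eq0; apply/eqP; apply: (noeig_row hA).
  by rewrite mulmxDl phiM // hy addrC.
have c0 : phi *m Cd G = 0 by rewrite phiCd hx opprK hy.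
have p0 : phi = 0.
  by apply: NNPP => /eqP nz; move: (cd phi nz hphi); rewrite c0 eqxx.
have y0 : y = 0 by rewrite -hy p0 mul0mx.
rewrite y0 mul0mx addr0 in h1.
by rewrite (noeig_row hA h1) y0 row_mx0.
Qed.

End SysX.

Unset Implicit Arguments.

Theorem theorem1 (C : numClosedFieldType) (n m p nu : nat)
    (A : 'M[C]_n) (B : 'M[C]_(n, m)) (Cm : 'M[C]_(p, n)) (D : 'M[C]_(p, m))
    (F : 'M[C]_nu)
    (hAF : disjoint_spectra A F) :
  let cond_i :=
    forall l : C, eigenvalue F l -> row_free (rosenbrock A B Cm D l) in
  let cond_ii :=
    forall (P : 'M[C]_(n, nu)) (Q : 'M[C]_(p, nu)),
      exists (Pi : 'M[C]_(n, nu)) (Psi : 'M[C]_(m, nu)),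
        Pi *m F = A *m Pi + B *m Psi + P /\ 0 = Cm *m Pi + D *m Psi + Q in
  let cond_iii :=
    forall (Pb : 'M[C]_(nu, n)) (Qb : 'M[C]_(nu, m))
           (M1 M2 : 'M[C]_(nu, n)) (G1 G2 : 'M[C]_(nu, p)),
      (M1 *m A = F *m M1 + G1 *m Cm + Pb /\ 0 = - M1 *m B + G1 *m D + Qb) ->
      (M2 *m A = F *m M2 + G2 *m Cm + Pb /\ 0 = - M2 *m B + G2 *m D + Qb) ->
      M1 = M2 /\ G1 = G2 in
  let cond_iv :=
    forall Y : 'M[C]_(p, nu), exists H : 'M[C]_(m, nu), SSC_p A B Cm D F H = Y in
  let cond_v := injective (SSC_d A B Cm D F) in
  let cond_i_plus :=
    forall l : C, eigenvalue F l -> 0 <= 'Re l -> row_free (rosenbrock A B Cm D l) in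
  [/\ (cond_i <-> cond_ii), (cond_i <-> cond_iii), (cond_i <-> cond_iv),
      (cond_i <-> cond_v) &
   forall G : 'M[C]_(nu, p),
   [/\ (controllable F G -> cond_i -> controllable F (SSC_d A B Cm D F G)),
       (stabilizable F G -> cond_i_plus -> stabilizable F (SSC_d A B Cm D F G)),
       ((forall l : C, eigenvalue F l -> GT_ker_full F G l) ->
          controllable F (SSC_d A B Cm D F G) -> controllable F G /\ cond_i) &
       ((forall l : C, eigenvalue F l -> 0 <= 'Re l -> GT_ker_full F G l) ->
          stabilizable F (SSC_d A B Cm D F G) -> stabilizable F G /\ cond_i_plus)]].
Proof.
move=> ci cii ciii civ cv cip.
split.
- split => h; first exact: (iv_ii hAF (v_iv hAF (i_v hAF h))).
  exact: (v_i hAF (iv_v hAF (ii_iv hAF h))).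
- split => h; first exact: (v_iii hAF (i_v hAF h)).
  exact: (v_i hAF (iii_v hAF h)).
- split => h; first exact: (v_iv hAF (i_v hAF h)).
  exact: (v_i hAF (iv_v hAF h)).
- split => h; first exact: (i_v hAF h).
  exact: (v_i hAF h).
move=> G; split.
- move=> hc hi l el phi nz hphi; apply/eqP => h0.
  by move: (hc l el phi nz hphi); rewrite (ctrl_core hAF (hi l el) hphi h0) eqxx.
- move=> hc hi l el hre phi nz hphi; apply/eqP => h0.
  by move: (hc l el hre phi nz hphi); rewrite (ctrl_core hAF (hi l el hre) hphi h0) eqxx.
- move=> hk hcd; split => l el.
    exact: (ctrl_conv hAF el (hk l el) (hcd l el)).1.
  exact: (ctrl_conv hAF el (hk l el) (hcd l el)).2.
- move=> hk hs; split => l el hre.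
    exact: (ctrl_conv hAF el (hk l el hre) (hs l el hre)).1.
  exact: (ctrl_conv hAF el (hk l el hre) (hs l el hre)).2.
Qed.
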